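(* Let $2\le k\le n$. For every Bayesian persuasion instance with $n$ actions and $k$ signals there exists an optimal signaling scheme with $k$ signals that is direct and persuasive and uses its $k$ signals to recommend $k$ distinct actions. Moreover, if the instance is symmetric, there exists an optimal direct and persuasive scheme with $k$ signals whose signals recommend exactly the actions $1,\dots,k$.
   Context: A Bayesian persuasion instance: a receiver chooses one of the actions $[n]=\{1,\dots,n\}$. Each action $i$ has a type $\theta_i$ from a finite set $\Theta_i$; the state of nature $\boldsymbol\theta=(\theta_1,\dots,\theta_n)$ is drawn from a commonly known distribution $q$ on $\Theta\subseteq\Theta_1\times\dots\times\Theta_n$, with $q_{\boldsymbol\theta}$ the probability of $\boldsymbol\theta$. Each type $t$ has a receiver value $\rho(t)$ and a sender value $\xi(t)$; if the receiver takes action $i$ in state $\boldsymbol\theta$, the receiver gets $\rho(\theta_i)$ and the sender gets $\xi(\theta_i)$. A signaling scheme with $k$ signals is a map $\varphi$ assigning to each state $\boldsymbol\theta$ a probability distribution $\varphi(\boldsymbol\theta,\cdot)$ on a signal set $\Sigma$ with $|\Sigma|=k$. The sender commits to $\varphi$, observes $\boldsymbol\theta$, sends $\sigma\sim\varphi(\boldsymbol\theta,\cdot)$; the receiver, knowing $q$ and $\varphi$, chooses for each signal an action maximizing her conditional expected utility given $\sigma$, breaking ties in favor of the sender (and remaining ties by a fixed rule). $u_{\mathcal S}(\varphi)$ and $u_{\mathcal R}(\varphi)$ denote the resulting expected utilities of sender and receiver. A scheme is optimal with $k$ signals if it maximizes $u_{\mathcal S}$ over all schemes with $k$ signals. A scheme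 is direct if each signal is identified with an action it recommends; a direct scheme is persuasive if for every signal $\sigma$ sent with positive probability and recommending action $i$, $\mathbb E[\rho(\theta_i)\mid\sigma]\ge \mathbb E[\rho(\theta_j)\mid \sigma]$ for all $j\in[n]$. An instance is symmetric if $q_{\boldsymbol\theta}=q_{\boldsymbol\theta'}$ whenever $\boldsymbol\theta'$ is a permutation of $\boldsymbol\theta$. *)

(* Defs.v *)
From HB Require Import structures.
From mathcomp Require Import all_boot all_order all_algebra all_fingroup.
From mathcomp Require Import reals.
Set Implicit Arguments. Unset Strict Implicit. Unset Printing Implicit Defensive.
Import Order.TTheory GRing.Theory Num.Theory.
Local Open Scope ring_scope.

(* Types: all types of all actions live in a common finite universe T
   (Theta_i subset of T); a state is theta : {ffun 'I_n -> T}.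
   rho, xi : T -> R are receiver / sender values of types.
   The prior q is a probability distribution on states (its support is Theta).
   A signaling scheme with k signals: phi theta sigma = prob of sending
   signal sigma : 'I_k in state theta. *)

Section BP.
Variables (R : realType) (T : finType) (n k : nat).

Definition state := {ffun 'I_n -> T}.

Definition is_distr (q : {ffun state -> R}) : Prop :=
  (forall th, 0 <= q th) /\ \sum_th q th = 1.

Definition is_scheme (phi : {ffun state -> {ffun 'I_k -> R}}) : Prop :=
  (forall th s, 0 <= phi th s) /\ (forall th, \sum_s phi th s = 1).

Variables (q : {ffun state -> R}) (rho xi : T -> R).

Definition sig_prob (phi : {ffun state -> {ffun 'I_k -> R}}) (s : 'I_k) : R :=
  \sum_th q th * phi th s.

(* conditional expectation E[f theta | s] (0 if s has probability 0) *)
Definition cond_exp (phi : {ffun state -> {ffun 'I_k -> R}}) (s : 'I_k)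
  (f : state -> R) : R :=
  (\sum_th q th * phi th s * f th) / sig_prob phi s.

Definition recv_val (phi : {ffun state -> {ffun 'I_k -> R}}) (s : 'I_k) (i : 'I_n) : R := cond_exp phi s (fun th => rho (th i)).
Definition send_val (phi : {ffun state -> {ffun 'I_k -> R}}) (s : 'I_k) (i : 'I_n) : R := cond_exp phi s (fun th => xi (th i)).

Definition best_resp (phi : {ffun state -> {ffun 'I_k -> R}}) (s : 'I_k) : {set 'I_n} :=
  [set i | [forall j, recv_val phi s j <= recv_val phi s i]].

Definition recv_action (phi : {ffun state -> {ffun 'I_k -> R}}) (s : 'I_k) : option 'I_n :=
  [pick i | (i \in best_resp phi s) &&
            [forall j in best_resp phi s, send_val phi s j <= send_val phi s i]].

Definition u_S (phi : {ffun state -> {ffun 'I_k -> R}}) : R :=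
  \sum_s \sum_th q th * phi th s *
     (if recv_action phi s is Some i then xi (th i) else 0).

Definition optimal (phi : {ffun state -> {ffun 'I_k -> R}}) : Prop :=
  is_scheme phi /\ forall phi', is_scheme phi' -> u_S phi' <= u_S phi.

(* direct scheme: signal s recommends action rec s; persuasive *)
Definition persuasive (phi : {ffun state -> {ffun 'I_k -> R}}) (rec : 'I_k -> 'I_n) : Prop :=
  forall s, 0 < sig_prob phi s ->
    forall j, recv_val phi s j <= recv_val phi s (rec s).

End BP.

Definition symmetric_instance (R : realType) (T : finType) (n : nat)
  (q : {ffun state T n -> R}) : Prop :=
  forall (th : state T n) (p : 'S_n), q [ffun i => th (p i)] = q th.

(* Main.v *)
Require Import Defs.
From HB Require Import structures.
From mathcomp Require Import all_boot all_order all_algebra all_fingroup.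
From mathcomp Require Import reals.
From mathcomp Require Import all_classical all_reals all_analysis.
Import Order.TTheory GRing.Theory Num.Theory.
Import numFieldNormedType.Exports.
Set Implicit Arguments. Unset Strict Implicit. Unset Printing Implicit Defensive.
Local Open Scope ring_scope.

Lemma perm_ext (T : finType) (A : eqType) (r : seq A) (f g : A -> T) :
  uniq r -> {in r &, injective f} -> {in r &, injective g} ->
  exists s : {perm T}, forall a, a \in r -> s (f a) = g a.
Proof.
elim: r => [|a r IH] /=.
  by move=> _ _ _; exists 1%g.
move=> /andP [ar ur] finj ginj.
have [||s Hs] := IH ur.
- by move=> x y xr yr; apply: finj; rewrite inE ?xr ?yr orbT.
- by move=> x y xr yr; apply: ginj; rewrite inE ?xr ?yr orbT.
exists (s * tperm (s (f a)) (g a))%g => b; rewrite inE => /orP [/eqP -> | br].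
  by rewrite permM tpermL.
rewrite permM (Hs b br); apply: tpermD.
- apply/negP => /eqP E; rewrite -(Hs b br) in E.
  have E2 := perm_inj E.
  have ab : a = b by apply: finj; rewrite ?inE ?br ?eqxx ?orbT.
  by move: ar; rewrite ab br.
- apply/negP => /eqP E.
  have ab : a = b by apply: ginj; rewrite ?inE ?br ?eqxx ?orbT.
  by move: ar; rewrite ab br.
Qed.

Lemma superset_card (T : finType) (m : nat) (A : {set T}) :
  (#|A| <= m <= #|T|)%N -> exists B : {set T}, A \subset B /\ #|B| = m.
Proof.
move Hd : (m - #|A|)%N => d; elim: d A Hd => [|d IH] A Hd /andP [Am mT].
  exists A; split => //; apply/eqP; rewrite eqn_leq Am /=.
  by rewrite -subn_eq0 Hd.
have AT : (#|A| < #|T|)%N.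
  by apply: (leq_trans _ mT); rewrite -subn_gt0 Hd.
have : (0 < #|~: A|)%N.
  by have := cardsC A; move=> E; rewrite -(ltn_add2l #|A|) E addn0.
move=> /card_gt0P [x]; rewrite inE => xA.
have [||B [sB cB]] := IH (x |: A).
  by rewrite cardsU1 xA add1n subnS Hd.
  by rewrite cardsU1 xA add1n mT andbT -subn_gt0 Hd.
exists B; split => //; apply: fintype.subset_trans sB; exact: finset.subsetUr.
Qed.

Lemma cover_inj (k n : nat) (hkn : (k <= n)%N) (a : 'I_k -> 'I_n) :
  exists rec : 'I_k -> 'I_n, injective rec /\ forall s', exists s, rec s = a s'.
Proof.
pose U := [set a s | s in 'I_k].
have cU : (#|U| <= k)%N by rewrite (leq_trans (leq_imset_card _ _)) // card_ord.
have := @superset_card _ k U; rewrite cU card_ord hkn => /(_ isT) [B [sUB cB]].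
exists (fun s => enum_val (cast_ord (esym cB) s)); split.
  by move=> x y /enum_val_inj /cast_ord_inj.
move=> s'; have aB : a s' \in B by apply: (fintype.subsetP sUB); apply: imset_f.
exists (cast_ord cB (enum_rank_in aB (a s'))).
by rewrite cast_ordK enum_rankK_in.
Qed.

Lemma perm_widen (k n : nat) (hkn : (k <= n)%N) (rec : 'I_k -> 'I_n) :
  injective rec -> exists s : 'S_n, forall i, s (widen_ord hkn i) = rec i.
Proof.
move=> rinj.
have [||s Hs] := @perm_ext _ _ (enum 'I_k) (widen_ord hkn) rec (enum_uniq _).
- by move=> x y _ _ /(congr1 val) /= /val_inj.
- by move=> x y _ _; apply: rinj.
by exists s => i; apply: Hs; rewrite mem_enum.
Qed.

Lemma exmax (R : realType) (I : finType) (P : {pred I}) (F : I -> R) i0 :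
  P i0 -> exists i, P i /\ forall j, P j -> F j <= F i.
Proof.
move=> Pi0; case: (arg_maxP F Pi0) => i Pi H; exists i; split => // j Pj; exact: H.
Qed.

Section Main.
Variables (R : realType) (T : finType) (n k : nat) (q : {ffun state T n -> R})
  (rho xi : T -> R).
Hypothesis hq : is_distr q.
Local Notation sch := {ffun state T n -> {ffun 'I_k -> R}}.

Definition Num (phi : sch) s (f : state T n -> R) := \sum_th q th * phi th s * f th.

Lemma Num_ext (phi : sch) s f g : (forall th, f th = g th) -> Num phi s f = Num phi s g.
Proof. by move=> E; apply: eq_bigr => th _; rewrite E. Qed.

Lemma qphi_ge0 (phi : sch) th s : is_scheme phi -> 0 <= q th * phi th s.
Proof. by move=> [H _]; rewrite mulr_ge0 //; case: hq. Qed.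

Lemma sp_ge0 (phi : sch) s : is_scheme phi -> 0 <= sig_prob q phi s.
Proof. by move=> Hs; apply: sumr_ge0 => th _; exact: qphi_ge0. Qed.

Lemma Num_sp0 (phi : sch) s f : is_scheme phi -> sig_prob q phi s = 0 -> Num phi s f = 0.
Proof.
move=> Hs H0; have H := psumr_eq0P (fun th _ => qphi_ge0 th s Hs) H0.
by apply: big1 => th _; rewrite H // mul0r.
Qed.

Lemma num_le (phi : sch) s f g : is_scheme phi ->
  (0 < sig_prob q phi s -> cond_exp q phi s f <= cond_exp q phi s g) ->
  Num phi s f <= Num phi s g.
Proof.
move=> Hs H; have := sp_ge0 s Hs; rewrite le_eqVlt => /orP [/eqP E|P].
  by rewrite !Num_sp0.
have := H P; rewrite /cond_exp ler_pM2r //; by rewrite invr_gt0.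
Qed.

Lemma cond_le (phi : sch) s f g : is_scheme phi -> Num phi s f <= Num phi s g ->
  cond_exp q phi s f <= cond_exp q phi s g.
Proof.
move=> Hs H; rewrite /cond_exp ler_wpM2r //; by rewrite invr_ge0 sp_ge0.
Qed.

Lemma pers_num (phi : sch) rec : is_scheme phi -> persuasive q rho phi rec ->
  forall s j, Num phi s (fun th => rho (th j)) <= Num phi s (fun th => rho (th (rec s))).
Proof. by move=> Hs Hp s j; apply: num_le => // P; exact: Hp. Qed.

Lemma num_pers (phi : sch) rec : is_scheme phi ->
  (forall s j, Num phi s (fun th => rho (th j)) <= Num phi s (fun th => rho (th (rec s)))) ->
  persuasive q rho phi rec.
Proof. by move=> Hs H s _ j; apply: cond_le. Qed.

Lemma br_num (phi : sch) s i : is_scheme phi -> i \in best_resp q rho phi s ->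
  forall j, Num phi s (fun th => rho (th j)) <= Num phi s (fun th => rho (th i)).
Proof.
move=> Hs; rewrite inE => /forallP H j; apply: num_le => // _; exact: H.
Qed.

Lemma action_some (phi : sch) s (i0 : 'I_n) : exists i,
  recv_action q rho xi phi s = Some i /\ i \in best_resp q rho phi s /\
  forall j, j \in best_resp q rho phi s -> send_val q xi phi s j <= send_val q xi phi s i.
Proof.
have [ib [_ Hb]] := @exmax R _ predT (recv_val q rho phi s) i0 isT.
have ibr : ib \in best_resp q rho phi s.
  by rewrite inE; apply/forallP => j; exact: Hb.
have [i1 [i1b H1]] := @exmax R _ (mem (best_resp q rho phi s)) (send_val q xi phi s) ib ibr.
rewrite /recv_action; case: pickP => [x /andP [xb /forall_inP Hx] | H].
  by exists x; split => //; split => // j jb; exact: Hx.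
move: (H i1) => /negbT; rewrite negb_and => /orP [/negP []|/negP []].
  exact: i1b.
by apply/forall_inP => j jb; exact: H1.
Qed.

Lemma uS_eq (phi : sch) (i0 : 'I_n) : u_S q rho xi phi =
  \sum_s Num phi s (fun th => xi (th (odflt i0 (recv_action q rho xi phi s)))).
Proof.
apply: eq_bigr => s _; have [i [-> _]] := action_some phi s i0; by [].
Qed.

Definition Vv (phi : sch) (rec : 'I_k -> 'I_n) :=
  \sum_s Num phi s (fun th => xi (th (rec s))).

Lemma lower (phi : sch) rec : is_scheme phi -> persuasive q rho phi rec ->
  Vv phi rec <= u_S q rho xi phi.
Proof.
move=> Hs Hp; apply: ler_sum => s _.
have [i [-> [ib imax]]] := action_some phi s (rec s).
change (Num phi s (fun th => xi (th (rec s))) <= Num phi s (fun th => xi (th i))).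
apply: num_le => // sp0.
have rb : rec s \in best_resp q rho phi s.
  by rewrite inE; apply/forallP => j; exact: Hp.
exact: imax.
Qed.

Lemma reduce (phi' : sch) (i0 : 'I_n) (hkn : (k <= n)%N) : is_scheme phi' ->
  exists (phi'' : sch) (rec : 'I_k -> 'I_n), injective rec /\ is_scheme phi'' /\
    persuasive q rho phi'' rec /\ u_S q rho xi phi' <= Vv phi'' rec.
Proof.
move=> Hs.
pose a s := odflt i0 (recv_action q rho xi phi' s).
have abr : forall s, a s \in best_resp q rho phi' s.
  by move=> s; rewrite /a; have [i [-> [ib _]]] := action_some phi' s i0.
have [rec [rinj rcov]] := cover_inj hkn a.
pose phi'' : sch := [ffun th => [ffun s => \sum_(s' | a s' == rec s) phi' th s']].
have EX : forall (g : 'I_k -> R),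
    \sum_s \sum_(s' | a s' == rec s) g s' = \sum_s' g s'.
  move=> g; under eq_bigr do rewrite big_mkcond.
  rewrite exchange_big /=; apply: eq_bigr => s' _.
  have [s0 e] := rcov s'.
  rewrite (bigD1 s0) //= -e eqxx big1 ?addr0 // => s ne.
  rewrite ifF //; apply/negbTE; apply/eqP => E.
  by move: ne; rewrite (rinj _ _ E) eqxx.
have NA : forall s f, Num phi'' s f = \sum_(s' | a s' == rec s) Num phi' s' f.
  move=> s f; rewrite /Num.
  under eq_bigr do rewrite !ffunE mulr_sumr mulr_suml.
  by rewrite exchange_big.
have Hs'' : is_scheme phi''.
  split.
    move=> th s; rewrite !ffunE; apply: sumr_ge0 => s' _; by case: Hs.
  move=> th; under eq_bigr do rewrite !ffunE.
  by apply: etrans (EX (fun s' => phi' th s')) _; case: Hs.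
exists phi'', rec; split => //; split => //; split.
  apply: num_pers => // s j; rewrite !NA; apply: ler_sum => s' /eqP e.
  by rewrite -e; apply: br_num.
rewrite le_eqVlt; apply/orP; left; apply/eqP; rewrite (uS_eq phi' i0) /Vv.
rewrite -(EX (fun s' => Num phi' s' (fun th => xi (th (a s'))))).
apply: eq_bigr => s _; rewrite NA; apply: eq_bigr => s' /eqP e.
by rewrite e.
Qed.

Lemma sym_move (hkn : (k <= n)%N) (phi : sch) rec :
  symmetric_instance q -> injective rec -> is_scheme phi -> persuasive q rho phi rec ->
  exists phi3 : sch, is_scheme phi3 /\ persuasive q rho phi3 (widen_ord hkn) /\
    Vv phi rec = Vv phi3 (widen_ord hkn).
Proof.
move=> Hsym rinj Hs Hp.
have [tau Ht] := perm_widen hkn rinj.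
pose h (th : state T n) : state T n := [ffun i => th (tau i)].
pose g (th : state T n) : state T n := [ffun i => th ((tau^-1)%g i)].
have hg : cancel h g by move=> th; apply/ffunP => i; rewrite !ffunE permKV.
have qh : forall th, q (h th) = q th by move=> th; exact: Hsym.
pose phi3 : sch := [ffun th => phi (g th)].
have N3 : forall s f, Num phi3 s f = Num phi s (fun th => f (h th)).
  move=> s f; rewrite /Num (reindex_inj (can_inj hg)).
  by apply: eq_bigr => th _; rewrite ffunE hg qh.
have Hs3 : is_scheme phi3.
  split; first by move=> th s; rewrite ffunE; case: Hs.
  by move=> th; rewrite ffunE; case: Hs.
exists phi3; split => //; split.
  apply: num_pers => // s j; rewrite !N3.
  have := pers_num Hs Hp s (tau j).
  rewrite (Num_ext _ _ (g := fun th => rho (h th j))); last by move=> th; rewrite ffunE.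
  rewrite (Num_ext _ _ (f := fun th => rho (th (rec s))) (g := fun th => rho (h th (widen_ord hkn s)))) //.
  by move=> th; rewrite ffunE Ht.
apply: eq_bigr => s _; rewrite N3; apply: Num_ext => th.
by rewrite ffunE Ht.
Qed.

End Main.

Section Attain.
Variable R : realType.

Definition linf m (c : 'I_m -> R) (v : 'rV[R]_m) : R := \sum_(i < m) c i * v ord0 i.

Lemma linf_cont m (c : 'I_m -> R) : continuous (linf c).
Proof.
rewrite /linf; elim: (index_enum _) => [|i r IH] v.
  under eq_fun do rewrite big_nil; exact: cst_continuous.
under eq_fun do rewrite big_cons.
apply: (continuousD (f := fun w : 'rV[R]_m => c i * w ord0 i)); last exact: IH.
apply: continuousM; first exact: cst_continuous.
exact: coord_continuous.
Qed.
End Attain.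

Section Attain2.
Variable R : realType.
Local Open Scope classical_set_scope.
Lemma attain m (c : 'I_m -> R) (I : Type) (a : I -> 'I_m -> R) (b : I -> R) :
  (exists v : 'rV[R]_m, (forall i, 0 <= v ord0 i <= 1) /\ (forall x, linf (a x) v <= b x)) ->
  exists v : 'rV[R]_m, ((forall i, 0 <= v ord0 i <= 1) /\ (forall x, linf (a x) v <= b x)) /\
   forall w : 'rV[R]_m, ((forall i, 0 <= w ord0 i <= 1) /\ (forall x, linf (a x) w <= b x)) ->
     linf c w <= linf c v.
Proof.
move=> [v0 Hv0].
pose B := [set v : 'rV[R]_m | forall i, (`[0, 1]%classic : set R) (v ord0 i)].
pose C := \bigcap_(x in [set: I]) (linf (a x) @^-1` [set y | y <= b x]).
have EF : forall v, (B `&` C) v <-> ((forall i, 0 <= v ord0 i <= 1) /\ (forall x, linf (a x) v <= b x)).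
  move=> v; rewrite /B /C /=; split.
    move=> [H1 H2]; split; last by move=> x; exact: H2.
    by move=> i; have := H1 i; rewrite /= in_itv.
  move=> [H1 H2]; split; last by move=> x _; exact: H2.
  by move=> i; rewrite /= in_itv; exact: H1.
have cB : compact B.
  have := @rV_compact R m (fun=> `[0, 1]%classic) (fun=> @segment_compact R 0 1).
  exact.
have cC : closed C.
  apply: closed_bigI => x _; apply: preimage_closed; last exact: closed_le.
  by move=> y _; exact: linf_cont.
have cF := compact_closedI cB cC.
have ne : (B `&` C) !=set0 by exists v0; apply/EF.
have cf : {within B `&` C, continuous (linf c)}.
  exact/continuous_subspaceT/linf_cont.
have [v vF Hmax] := @compact_EVT_max _ _ (linf c) (B `&` C) ne cF cf.
exists v; split; first by apply/EF; rewrite inE in vF.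
by move=> w /EF wF; apply: Hmax; rewrite inE.
Qed.
End Attain2.

From mathcomp Require Import ring.

Section LP.
Variables (R : realType) (T : finType) (n k : nat) (q : {ffun state T n -> R})
  (rho xi : T -> R).
Hypothesis hq : is_distr q.
Local Notation sch := {ffun state T n -> {ffun 'I_k -> R}}.
Local Notation P := (state T n * 'I_k)%type.

Definition ofv (v : 'rV[R]_#|{: P}|) : sch :=
  [ffun th => [ffun s => v ord0 (enum_rank (th, s))]].
Definition tov (phi : sch) : 'rV[R]_#|{: P}| :=
  \row_j phi (enum_val j).1 (enum_val j).2.
Definition LF (C : state T n -> 'I_k -> R) (phi : sch) :=
  \sum_th \sum_s C th s * phi th s.
Definition cof (C : state T n -> 'I_k -> R) : 'I_#|{: P}| -> R :=
  fun j => C (enum_val j).1 (enum_val j).2.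

Lemma ofvK phi : ofv (tov phi) = phi.
Proof.
apply/ffunP => th; apply/ffunP => s; by rewrite !ffunE mxE enum_rankK.
Qed.

Lemma linf_ofv C v : linf (cof C) v = LF C (ofv v).
Proof.
rewrite /LF pair_bigA /= /linf (reindex (@enum_rank P)) /=; last first.
  by exists (@enum_val P predT) => x _; [exact: enum_rankK | exact: enum_valK].
apply: eq_bigr => -[th s] _; by rewrite /cof enum_rankK !ffunE.
Qed.

Definition cons (rec : 'I_k -> 'I_n) (x : (state T n * bool) + ('I_k * 'I_n)) :
    state T n -> 'I_k -> R :=
  match x with
  | inl (th0, b) => fun th s => (if b then 1 else -1) * (th == th0)%:R
  | inr (s0, j) => fun th s => (s == s0)%:R * (q th * (rho (th j) - rho (th (rec s0))))
  end.
Definition bnd (x : (state T n * bool) + ('I_k * 'I_n)) : R :=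
  match x with inl (_, b) => if b then 1 else -1 | inr _ => 0 end.

Lemma LF_row c th0 phi :
  LF (fun th s => c * (th == th0)%:R) phi = c * \sum_s phi th0 s.
Proof.
rewrite /LF (bigD1 th0) //= [X in _ + X]big1 => [|th ne].
  rewrite addr0 mulr_sumr; apply: eq_bigr => s _; by rewrite eqxx mulr1.
by apply: big1 => s _; rewrite (negbTE ne) mulr0 mul0r.
Qed.

Lemma LF_pers s0 (j r : 'I_n) phi :
  LF (fun th s => (s == s0)%:R * (q th * (rho (th j) - rho (th r)))) phi =
  Num q phi s0 (fun th => rho (th j)) - Num q phi s0 (fun th => rho (th r)).
Proof.
rewrite /LF /Num -sumrB; apply: eq_bigr => th _.
rewrite (bigD1 s0) //= eqxx big1 => [|s ne]; first rewrite addr0 mul1r.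
  by rewrite mulrBr mulrBl; congr (_ - _); rewrite mulrAC.
by rewrite (negbTE ne) !mul0r.
Qed.

Lemma feas_iff rec phi : (is_scheme phi /\ persuasive q rho phi rec) <->
  ((forall th s, 0 <= phi th s <= 1) /\ forall x, LF (cons rec x) phi <= bnd x).
Proof.
split.
  move=> [Hs Hp]; split.
    move=> th s; case: Hs => H0 H1; rewrite H0 /= -(H1 th) (bigD1 s) //= lerDl.
    by apply: sumr_ge0 => i _.
  case=> [[th0 b]|[s0 j]] /=.
    rewrite LF_row; case: Hs => _ ->; by case: b; rewrite ?mulr1.
  by rewrite LF_pers subr_le0; exact: (pers_num hq Hs Hp).
move=> [Hb Hc].
have Hs : is_scheme phi.
  split; first by move=> th s; case/andP: (Hb th s).
  move=> th; apply/eqP; rewrite eq_le.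
  have := Hc (inl (th, true)); rewrite /= LF_row mul1r => ->.
  have := Hc (inl (th, false)); rewrite /= LF_row mulN1r lerN2 => -> //.
split => //; apply: (num_pers hq) => // s j.
by have := Hc (inr (s, j)); rewrite /= LF_pers subr_le0.
Qed.

Lemma lp_max rec :
  (exists phi : sch, is_scheme phi /\ persuasive q rho phi rec) ->
  exists phi : sch, (is_scheme phi /\ persuasive q rho phi rec) /\
    forall phi' : sch, is_scheme phi' /\ persuasive q rho phi' rec ->
      Vv q xi phi' rec <= Vv q xi phi rec.
Proof.
pose C0 := fun (th : state T n) (s : 'I_k) => q th * xi (th (rec s)).
have VLF : forall phi, Vv q xi phi rec = LF C0 phi.
  move=> phi; rewrite /Vv /LF /Num exchange_big; apply: eq_bigr => th _.
  apply: eq_bigr => s _; rewrite /C0; ring.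
move=> [phi0 /feas_iff [H0b H0c]].
have [|v [[vb vc] vmax]] := @attain R #|{: P}| (cof C0) _
   (fun x => cof (cons rec x)) bnd.
  exists (tov phi0); split.
    by move=> i; rewrite mxE.
  by move=> x; rewrite linf_ofv ofvK.
have Hv : is_scheme (ofv v) /\ persuasive q rho (ofv v) rec.
  apply/feas_iff; split.
    by move=> th s; rewrite !ffunE.
  by move=> x; rewrite -linf_ofv.
exists (ofv v); split => // phi' /feas_iff [Hb Hc].
rewrite !VLF -(ofvK phi') -!linf_ofv; apply: vmax.
split.
  by move=> i; rewrite mxE.
by move=> x; rewrite linf_ofv ofvK.
Qed.
End LP.

Section Final.
Variables (R : realType) (T : finType) (n k : nat) (q : {ffun state T n -> R})
  (rho xi : T -> R).
Hypothesis hq : is_distr q.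
Local Notation sch := {ffun state T n -> {ffun 'I_k -> R}}.

Definition good (g : 'I_k -> 'I_n) (phi : sch) :=
  injective g /\ is_scheme phi /\ persuasive q rho phi g.

Lemma good_ext g g' (phi : sch) : g =1 g' -> good g phi -> good g' phi.
Proof.
move=> E [gi [Hs Hp]]; split; first by move=> x y; rewrite -!E; exact: gi.
split => // s sp j; rewrite -E; exact: Hp.
Qed.

Lemma Vv_ext g g' (phi : sch) : g =1 g' -> Vv q xi phi g = Vv q xi phi g'.
Proof. by move=> E; apply: eq_bigr => s _; rewrite E. Qed.

Lemma list_max (S : seq {ffun 'I_k -> 'I_n}) :
  (exists g phi, finfun g \in S /\ good g phi) ->
  exists g0 phi0, good g0 phi0 /\
    forall g phi, finfun g \in S -> good g phi -> Vv q xi phi g <= Vv q xi phi0 g0.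
Proof.
elim: S => [|r S IH]; first by move=> [g [phi []]].
move=> Hex.
have Hr : forall g phi, finfun g = r -> good g phi -> good r phi.
  by move=> g phi E; apply: good_ext => s; rewrite -E ffunE.
have Vr : forall g phi, finfun g = r -> Vv q xi phi g = Vv q xi phi r.
  by move=> g phi E; apply: Vv_ext => s; rewrite -E ffunE.
case: (pselect (exists phi, good r phi)) => [[phir Hphir] | Hno].
  have [|phim [Hm Hmax]] := @lp_max _ _ _ _ q rho xi hq r.
    by exists phir; case: Hphir.
  have gm : good r phim by split => //; case: Hphir.
  case: (pselect (exists g phi, finfun g \in S /\ good g phi)) => [HS | HS].
    have [g0 [phi0 [G0 Hmax0]]] := IH HS.
    case: (lerP (Vv q xi phim r) (Vv q xi phi0 g0)) => Hc.
      exists g0, phi0; split => // g phi; rewrite inE => /orP [/eqP E|gS] Hg.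
        rewrite (Vr _ _ E); apply: le_trans Hc; apply: Hmax.
        by case: (Hr _ _ E Hg) => _ [].
      exact: Hmax0.
    exists r, phim; split => // g phi; rewrite inE => /orP [/eqP E|gS] Hg.
      rewrite (Vr _ _ E); apply: Hmax; by case: (Hr _ _ E Hg) => _ [].
    apply: le_trans (ltW Hc); exact: Hmax0.
  exists r, phim; split => // g phi; rewrite inE => /orP [/eqP E|gS] Hg.
    rewrite (Vr _ _ E); apply: Hmax; by case: (Hr _ _ E Hg) => _ [].
  by case: HS; exists g, phi.
have [|g0 [phi0 [G0 Hmax0]]] := IH.
  move: Hex => [g [phi [/[!inE] /orP [/eqP E|gS] Hg]]].
    by case: Hno; exists phi; exact: Hr _ _ E Hg.
  by exists g, phi.
exists g0, phi0; split => // g phi; rewrite inE => /orP [/eqP E|gS] Hg.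
  by case: Hno; exists phi; exact: Hr _ _ E Hg.
exact: Hmax0.
Qed.

End Final.

Unset Implicit Arguments.
Set Strict Implicit.

Theorem lemma2p1 (R : realType) (T : finType) (n k : nat)
  (hk2 : (2 <= k)%N) (hkn : (k <= n)%N)
  (q : {ffun state T n -> R}) (rho xi : T -> R) :
  is_distr q ->
  (exists (phi : {ffun state T n -> {ffun 'I_k -> R}}) (rec : 'I_k -> 'I_n),
      optimal q rho xi phi /\ persuasive q rho phi rec /\ injective rec) /\
  (symmetric_instance q ->
   exists (phi : {ffun state T n -> {ffun 'I_k -> R}}),
      optimal q rho xi phi /\ persuasive q rho phi (widen_ord hkn)).
Proof.
move=> hq.
have k0 : (0 < k)%N by apply: leq_trans hk2.
pose s0 : 'I_k := Ordinal k0.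
pose i0 : 'I_n := widen_ord hkn s0.
pose phic : {ffun state T n -> {ffun 'I_k -> R}} := [ffun th => [ffun s => (s == s0)%:R]].
have Hc : is_scheme phic.
  split; first by move=> th s; rewrite !ffunE ler0n.
  move=> th; under eq_bigr do rewrite !ffunE.
  by rewrite (bigD1 s0) //= big1 ?addr0 ?eqxx // => s /negbTE ->.
have [phi1 [rec1 [ri1 [Hs1 [Hp1 _]]]]] := reduce rho xi hq i0 hkn Hc.
split.
  have [|g0 [phi0 [[gi [Hs0 Hp0]] Hmax0]]] :=
      @list_max _ _ _ _ q rho xi hq (enum {ffun 'I_k -> 'I_n}).
    by exists rec1, phi1; rewrite mem_enum.
  exists phi0, g0; split => //; split => // phi' Hs'.
  have [phi'' [rec [ri [Hs'' [Hp'' Hle]]]]] := reduce rho xi hq i0 hkn Hs'.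
  apply: le_trans Hle _; apply: le_trans (lower xi hq Hs0 Hp0).
  by apply: Hmax0; [rewrite mem_enum | ].
move=> Hsym.
have [phi3 [Hs3 [Hp3 _]]] := sym_move xi hq hkn Hsym ri1 Hs1 Hp1.
have [|phim [[Hsm Hpm] Hmax]] := @lp_max _ _ _ _ q rho xi hq (widen_ord hkn).
  by exists phi3.
exists phim; split => //; split => // phi' Hs'.
have [phi'' [rec [ri [Hs'' [Hp'' Hle]]]]] := reduce rho xi hq i0 hkn Hs'.
have [phi4 [Hs4 [Hp4 E4]]] := sym_move xi hq hkn Hsym ri Hs'' Hp''.
apply: le_trans Hle _; rewrite E4; apply: le_trans (lower xi hq Hsm Hpm).
exact: Hmax.
Qed.
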